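(* Let $G=(V,A)$ be a finite simple graph without loops with $|e|\ge 2$ for all $e\in V$, and $\mathfrak n=\mathfrak n(G)=W\oplus\mathfrak z$. Then $(\Lambda^2\mathfrak n)^{\mathfrak n}=\Lambda^2\mathfrak z$ and $\mathfrak n$ is of TST type. Consequently every Lie bialgebra cobracket $\delta$ on $\mathfrak n$ satisfies $\delta(\mathfrak z)\subseteq\Lambda^2\mathfrak z$ and $\delta(W)\subseteq (W\wedge\mathfrak z)\oplus\Lambda^2\mathfrak z$; more precisely $\delta(z)=\delta_{\mathfrak z}(z)$ and $\delta(v)=\sum_{\alpha\in A}D^\alpha(v)\wedge\alpha+\varphi(v)$ with linear maps $\delta_{\mathfrak z}:\mathfrak z\to\Lambda^2\mathfrak z$, $D^\alpha:W\to W$, $\varphi:W\to\Lambda^2\mathfrak z$ satisfying: $\delta_{\mathfrak z}$ satisfies co-Jacobi; writing $\delta_{\mathfrak z}(\gamma)=\sum_{\alpha<\beta}c_\gamma^{\alpha\beta}\alpha\wedge\beta$, $[D^\alpha,D^\beta]=\sum_\gamma c_\gamma^{\alpha\beta}D^\gamma$; $\sum_\gamma T_\gamma(x)(y)\delta_{\mathfrak z}(\gamma)=\sum_{\gamma,\eta}(T_\gamma(D^\eta x)(y)+T_\gamma(x)(D^\eta y))\gamma\wedge\eta$ for $x,y\in W$; and, writing $\varphi(v)=\sum_{\alpha<\beta}\varphi_{\alpha\beta}(v)\alpha\wedge\beta$, $\sum_\gamma\varphi(D^\gamma v)\wedge\gamma+\sum_{\alpha<\beta}\varphi_{\alpha\beta}(v)(\delta_{\mathfrak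 z}(\alpha)\wedge\beta-\alpha\wedge\delta_{\mathfrak z}(\beta))=0$ for $v\in W$.
   Context: $V=\{e_1,\dots,e_n\}$ ordered, each edge joining $e_i,e_j$ ($i<j$) oriented from $e_i$ to $e_j$, edges $A$ given a fixed total order. $\mathfrak n(G)$ over a field of characteristic zero has basis $V\cup A$, $[e_i,e_j]=\alpha$ if $\alpha$ goes from $e_i$ to $e_j$, $[e_i,e_j]=0$ if not adjacent, edges central; $W=\mathrm{span}(V)$, center $\mathfrak z=\mathrm{span}(A)$. $T_\gamma:W\to W^*$ is defined by $[v,w]=\sum_\gamma T_\gamma(v)(w)\gamma$. $\mathfrak n$ is of TST type if the only linear $S:W^*\to W$ with $T_\alpha ST_\beta+T_\beta ST_\alpha=0$ for all $\alpha,\beta\in A$ is $S=0$. Invariants are for $\mathrm{ad}_x(a\wedge b)=[x,a]\wedge b+a\wedge[x,b]$. A Lie bialgebra cobracket is a linear $\delta:\mathfrak n\to\Lambda^2\mathfrak n$ satisfying co-Jacobi ($\delta(x_1)\wedge x_2-x_1\wedge\delta(x_2)=0$, Sweedler $\delta(x)=x_1\wedge x_2$) and $\delta[x,y]=[\delta x,y]+[x,\delta y]$. *)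

(* Defs.v *)
From HB Require Import structures.
From mathcomp Require Import all_boot all_order all_algebra.
Set Implicit Arguments. Unset Strict Implicit. Unset Printing Implicit Defensive.
Import Order.TTheory GRing.Theory Num.Theory.
Local Open Scope ring_scope.

(* Lambda^2 is modelled by antisymmetric 2-tensors: a /\ b := a(x)b - b(x)a.
   Lambda^3 is modelled by alternating 3-tensors (full antisymmetrisation).   *)
Section Generic.
Variables (F : fieldType) (I : finType).

Definition vec := {ffun I -> F^o}.
Definition ten2 := {ffun I * I -> F^o}.
Definition ten3 := {ffun I * I * I -> F^o}.

Definition ev (p : I) : vec := [ffun r => (r == p)%:R].

Definition antisym2 (X : ten2) := forall p q, X (p, q) = - X (q, p).

Definition wedge (a b : vec) : ten2 := [ffun pq => a pq.1 * b pq.2 - a pq.2 * b pq.1].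

Definition wedge21 (X : ten2) (c : vec) : ten3 :=
  [ffun pqr => let: (p, q, r) := pqr in
     X (p, q) * c r + X (q, r) * c p + X (r, p) * c q].
Definition wedge12 (c : vec) (X : ten2) : ten3 :=
  [ffun pqr => let: (p, q, r) := pqr in
     c p * X (q, r) + c q * X (r, p) + c r * X (p, q)].

Definition bord (p q : I) : bool := (enum_rank p < enum_rank q)%N.

(* the linear map Lambda^2 -> Lambda^3,  x1 /\ x2 |-> f(x1) /\ x2 - x1 /\ f(x2),
   applied to X = sum_{p<q} X(p,q) e_p /\ e_q *)
Definition cojac (f : vec -> ten2) (X : ten2) : ten3 :=
  \sum_(p : I) \sum_(q : I | bord p q)
     X (p, q) *: (wedge21 (f (ev p)) (ev q) - wedge12 (ev p) (f (ev q))).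

Definition coJacobi (f : vec -> ten2) := forall x, cojac f (f x) = 0.

(* adjoint action of x on Lambda^2:  ad_x(a/\b) = [x,a]/\b + a/\[x,b] *)
Definition ad2 (br : vec -> vec -> vec) (x : vec) (X : ten2) : ten2 :=
  [ffun pq => \sum_(r : I) (br x (ev r) pq.1 * X (r, pq.2)
                           + br x (ev r) pq.2 * X (pq.1, r))].

Definition is_cobracket (br : vec -> vec -> vec) (delta : vec -> ten2) :=
  [/\ linear delta, (forall x, antisym2 (delta x)), coJacobi delta &
      forall x y, delta (br x y) = ad2 br x (delta y) - ad2 br y (delta x)].

End Generic.

(* Graph on vertex set 'I_n given by a relation g (assumed symmetric, irreflexive).
   Edges: pairs (i,j) with i<j adjacent, oriented from e_i to e_j. *)
Section Graph.
Variables (F : fieldType) (n : nat) (g : rel 'I_n).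

Definition edge : predArgType := {p : 'I_n * 'I_n | ((p.1 < p.2)%N && g p.1 p.2)}.
HB.instance Definition _ := Finite.copy edge {p : 'I_n * 'I_n | ((p.1 < p.2)%N && g p.1 p.2)}.

Definition basis : predArgType := ('I_n + edge)%type.
HB.instance Definition _ := Finite.copy basis ('I_n + edge)%type.

Definition Wv := vec F 'I_n.
Definition Zv := vec F edge.
Definition Nv := vec F basis.

Definition inW (w : Wv) : Nv := [ffun b => if b is inl i then w i else 0].
Definition inZ (z : Zv) : Nv := [ffun b => if b is inr a then z a else 0].
Definition inZ2 (Y : ten2 F edge) : ten2 F basis :=
  [ffun pq => match pq with (inr a, inr b) => Y (a, b) | _ => 0 end].

(* Lie bracket of n(G): [e_i,e_j] = alpha for alpha : e_i -> e_j, edges central *)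
Definition brN (x y : Nv) : Nv :=
  [ffun b => if b is inr a then
       x (inl (val a).1) * y (inl (val a).2) - x (inl (val a).2) * y (inl (val a).1)
     else 0].

(* restriction W x W -> z;  T_gamma(v)(w) = brW v w gamma *)
Definition brW (v w : Wv) : Zv :=
  [ffun a => v (val a).1 * w (val a).2 - v (val a).2 * w (val a).1].

Definition Tmx (gam : edge) : 'M[F]_n := \matrix_(i, j) brW (ev F i) (ev F j) gam.

Definition TST_type :=
  forall S : 'M[F]_n,
    (forall a b : edge, Tmx a *m S *m Tmx b + Tmx b *m S *m Tmx a = 0) -> S = 0.

End Graph.

Definition isE (n : nat) (g : rel 'I_n) (p : basis g) : bool :=
  if p is inr _ then true else false.

(* Main.v *)
Require Import Defs.
From HB Require Import structures.
From mathcomp Require Import all_boot all_order all_algebra ring.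
Import GRing.Theory.
Local Open Scope ring_scope.
Set Implicit Arguments. Unset Strict Implicit. Unset Printing Implicit Defensive.

Section Gen.
Variable F : fieldType.

Lemma sum_delta (T : finType) (c : T) (f : T -> F) :
  \sum_r (c == r)%:R * f r = f c.
Proof.
rewrite (bigD1 c) //= eqxx mul1r big1 ?addr0 // => r /negbTE.
by rewrite eq_sym => ->; rewrite mul0r.
Qed.

Lemma evE (I : finType) (p r : I) : ev F p r = (r == p)%:R.
Proof. by rewrite ffunE. Qed.

Lemma lin_props (U V : lmodType F) (f : U -> V) : linear f ->
  [/\ f 0 = 0, forall x y, f (x + y) = f x + f y & forall a x, f (a *: x) = a *: f x].
Proof.
move=> L.
have f0 : f 0 = 0.
  have := L 1 0 0; rewrite !scale1r addr0 => H.
  by apply: (addrI (f 0)); rewrite addr0 -H.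
split.
- exact: f0.
- by move=> x y; have := L 1 x y; rewrite !scale1r.
- by move=> a x; have := L a x 0; rewrite !addr0 f0 addr0.
Qed.

Lemma lin_sum (U V : lmodType F) (f : U -> V) (I : Type) (r : seq I) (P : pred I) (G : I -> U) :
  linear f -> f (\sum_(i <- r | P i) G i) = \sum_(i <- r | P i) f (G i).
Proof. by case/lin_props => f0 fD _; apply: big_morph. Qed.

Lemma vec_decomp (I : finType) (x : vec F I) : x = \sum_p x p *: ev F p.
Proof.
apply/ffunP => r; rewrite sum_ffunE.
rewrite (bigD1 r) //= big1 ?addr0.
  by rewrite !ffunE eqxx [_ *: _]mulr1.
by move=> p /negbTE Hp; rewrite !ffunE eq_sym Hp [_ *: _]mulr0.
Qed.

Lemma lin_vec (I : finType) (V : lmodType F) (f : vec F I -> V) (x : vec F I) :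
  linear f -> f x = \sum_p x p *: f (ev F p).
Proof.
move=> L; rewrite {1}(vec_decomp x) lin_sum //.
by apply: eq_bigr => p _; case: (lin_props L) => _ _ ->.
Qed.

Lemma eq_neg0 (charF0 : [pchar F] =i pred0) (x : F) : x = - x -> x = 0.
Proof.
move=> H; have : x *+ 2 = 0 by rewrite mulr2n {1}H addNr.
rewrite -mulr_natr => /eqP; rewrite mulf_eq0 => /orP [/eqP //|].
by move/pcharf0P: charF0 => ->.
Qed.


Lemma ffZ (I : finType) (a : F) (f : {ffun I -> F^o}) i : (a *: f) i = a * f i.
Proof. by rewrite ffunE. Qed.
Lemma ffB (I : finType) (f h : {ffun I -> F^o}) i : (f - h) i = f i - h i.
Proof. by rewrite !ffunE. Qed.
Lemma ffD (I : finType) (f h : {ffun I -> F^o}) i : (f + h) i = f i + h i.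
Proof. by rewrite !ffunE. Qed.
Lemma ff0 (I : finType) i : (0 : {ffun I -> F^o}) i = 0.
Proof. by rewrite !ffunE. Qed.

Lemma sum_delta' (T : finType) (c : T) (f : T -> F) :
  \sum_r f r * (c == r)%:R = f c.
Proof. by rewrite -[RHS]sum_delta; apply: eq_bigr => r _; rewrite mulrC. Qed.

Lemma w21E (I : finType) (Y : ten2 F I) (c : vec F I) x y z :
  wedge21 Y c (x, y, z) = Y (x, y) * c z + Y (y, z) * c x + Y (z, x) * c y.
Proof. by rewrite ffunE. Qed.

Lemma w12_w21 (I : finType) (c : vec F I) (Y : ten2 F I) : wedge12 c Y = wedge21 Y c.
Proof. by apply/ffunP => [[[x y] z]]; rewrite !ffunE /=; ring. Qed.

Lemma sum_pairs (I : finType) (u : I -> I -> F) : (forall p, u p p = 0) ->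
  \sum_p \sum_(q | bord p q) (u p q + u q p) = \sum_p \sum_q u p q.
Proof.
move=> H0.
have bC : forall p q : I, p != q -> ~~ bord p q = bord q p.
  move=> p q pq; rewrite /bord -leqNgt leq_eqVlt.
  have -> : (enum_rank q == enum_rank p :> nat) = false.
    apply/negbTE; apply: contra pq => /eqP/val_inj/enum_rank_inj ->; exact: eqxx.
  done.
symmetry.
transitivity (\sum_p \sum_q ((if bord p q then u p q else 0) + (if bord q p then u p q else 0))).
  apply: eq_bigr => p _; apply: eq_bigr => q _.
  have [->|pq] := eqVneq p q; first by rewrite /bord ltnn H0 addr0.
  move: (bC p q pq); case: (bord p q); case: (bord q p) => //= _.
    by rewrite addr0.
  by rewrite add0r.
under eq_bigr => p _ do rewrite big_split; rewrite big_split /=.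
rewrite [X in _ + X]exchange_big /=.
symmetry; under eq_bigr => p _ do rewrite big_split; rewrite big_split /=.
by congr (_ + _); apply: eq_bigr => p _; rewrite big_mkcond.
Qed.

Lemma CJ (charF0 : [pchar F] =i pred0) (I : finType) (f : vec F I -> ten2 F I)
  (X : ten2 F I) (HX : antisym2 X) x y z :
  cojac f X (x, y, z) = \sum_p (X (p, x) * f (ev F p) (y, z)
     + X (p, y) * f (ev F p) (z, x) + X (p, z) * f (ev F p) (x, y)).
Proof.
have X0 : forall p, X (p, p) = 0 by move=> p; exact: (eq_neg0 charF0 (HX p p)).
transitivity (\sum_p \sum_(q | bord p q)
  ((fun p q => X (p, q) * wedge21 (f (ev F p)) (ev F q) (x, y, z)) p q +
   (fun p q => X (p, q) * wedge21 (f (ev F p)) (ev F q) (x, y, z)) q p)).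
  rewrite /cojac sum_ffunE; apply: eq_bigr => p _; rewrite sum_ffunE; apply: eq_bigr => q _.
  by rewrite ffZ ffB w12_w21 /= (HX q p); ring.
rewrite sum_pairs; last by move=> p; rewrite /= X0 mul0r.
apply: eq_bigr => p _.
transitivity (\sum_q (f (ev F p) (x, y) * ((z == q)%:R * X (p, q))
   + f (ev F p) (y, z) * ((x == q)%:R * X (p, q))
   + f (ev F p) (z, x) * ((y == q)%:R * X (p, q)))).
  by apply: eq_bigr => q _; rewrite /= w21E !evE; ring.
by rewrite !big_split /= -!mulr_sumr !sum_delta; ring.
Qed.


Lemma wsum (I : finType) (K : I -> I -> F) a b :
  \sum_c \sum_e (K c e *: wedge (ev F c) (ev F e)) (a, b) = K a b - K b a.
Proof.
transitivity (\sum_c ((a == c)%:R * K c b - (b == c)%:R * K c a)).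
  apply: eq_bigr => c _.
  transitivity (\sum_e ((a == c)%:R * ((b == e)%:R * K c e)
                      - (b == c)%:R * ((a == e)%:R * K c e))).
    by apply: eq_bigr => e _; rewrite ffZ ffunE !evE /=; ring.
  by rewrite sumrB -!mulr_sumr !sum_delta.
by rewrite sumrB !sum_delta.
Qed.

End Gen.


Section Graph.
Variables (F : fieldType) (n : nat) (g : rel 'I_n).
Hypothesis g_sym : symmetric g.
Hypothesis g_irr : irreflexive g.
Hypothesis g_deg : forall i : 'I_n, (2 <= #|[set j | g i j]|)%N.

Definition patk (a : edge g) (k : 'I_n) (h : 'I_n -> F) : F :=
  ((val a).1 == k)%:R * h (val a).2 - ((val a).2 == k)%:R * h (val a).1.

Lemma patk_ext a k h h' : (forall m, h m = h' m) -> patk a k h = patk a k h'.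
Proof. by move=> H; rewrite /patk !H. Qed.

Lemma patk0 a k h : k != (val a).1 -> k != (val a).2 -> patk a k h = 0.
Proof.
by move=> H1 H2; rewrite /patk eq_sym (negbTE H1) eq_sym (negbTE H2) !mul0r subrr.
Qed.

Lemma neighbor_ex i (q : 'I_n) : exists2 k, g i k & k != q.
Proof.
have [/existsP [k /andP [H1 H2]]|/existsPn H] := boolP [exists k, g i k && (k != q)].
  by exists k.
have S : [set j | g i j] \subset [set q].
  apply/subsetP => k; rewrite !inE => gik.
  by have := H k; rewrite gik /= negbK.
have := subset_leq_card S; rewrite cards1 => H1.
by have := g_deg i; rewrite leqNgt ltnS H1.
Qed.

Lemma neighbor_ex2 i (q1 q2 : 'I_n) :
  (exists2 k, g i k & (k != q1) && (k != q2)) \/ (g i q1 /\ g i q2).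
Proof.
have [/existsP [k /andP [H1 H2]]|/existsPn H] :=
   boolP [exists k, g i k && ((k != q1) && (k != q2))].
  by left; exists k.
right.
have S : [set j | g i j] \subset [set q1; q2].
  apply/subsetP => k; rewrite !inE => gik.
  by have := H k; rewrite gik /= negb_and !negbK.
have C : (#|[set q1; q2]| <= #|[set j | g i j]|)%N.
  apply: leq_trans (g_deg i); rewrite cards2; by case: (q1 != q2).
have /eqP E : [set j | g i j] == [set q1; q2] by rewrite eqEcard S C.
have : q1 \in [set j | g i j] by rewrite E !inE eqxx.
have : q2 \in [set j | g i j] by rewrite E !inE eqxx orbT.
by rewrite !inE => -> ->.
Qed.

Lemma edge_ex i k : g i k -> exists a : edge g, exists2 s : F, s != 0 &
  forall c h, patk a c h = if c == k then s * h i else if c == i then - s * h k else 0.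
Proof.
move=> gik.
have ik : i != k by apply/eqP => E; move: gik; rewrite E g_irr.
case: (ltngtP i k) => [lt|lt|E]; last by move: ik; rewrite (val_inj E) eqxx.
- have P : (((i, k).1 < (i, k).2)%N && g (i, k).1 (i, k).2) by rewrite /= lt gik.
  exists (exist _ (i, k) P); exists (-1); first by rewrite oppr_eq0 oner_eq0.
  move=> c h; rewrite /patk /=.
  have [Ec|ck] := eqVneq c k; first by rewrite Ec (negbTE ik) /=; ring.
  have [_|ci] := eqVneq c i; first by rewrite /=; ring.
  by rewrite /=; ring.
- have P : (((k, i).1 < (k, i).2)%N && g (k, i).1 (k, i).2).
    by rewrite /= lt g_sym gik.
  exists (exist _ (k, i) P); exists 1; first by rewrite oner_eq0.
  move=> c h; rewrite /patk /=.
  have [Ec|ck] := eqVneq c k; first by rewrite Ec (negbTE ik) /=; ring.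
  have [_|ci] := eqVneq c i; first by rewrite /=; ring.
  by rewrite /=; ring.
Qed.

Lemma brN_inl (x y : Nv F g) i : brN x y (inl i) = 0.
Proof. by rewrite ffunE. Qed.

Lemma brN_inr (x y : Nv F g) a : brN x y (inr a) =
  x (inl (val a).1) * y (inl (val a).2) - x (inl (val a).2) * y (inl (val a).1).
Proof. by rewrite ffunE. Qed.

Lemma brN_ev k (y : Nv F g) a :
  brN (ev F (inl k)) y (inr a) = patk a k (fun m => y (inl m)).
Proof. by rewrite brN_inr !evE /patk. Qed.

Lemma sum_brN (x : Nv F g) (Z : basis g -> F) p :
  \sum_r brN x (ev F r) p * Z r = brN x [ffun r => Z r] p.
Proof.
case: p => [i|a].
  by rewrite brN_inl big1 // => r _; rewrite brN_inl mul0r.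
transitivity (\sum_r (x (inl (val a).1) * ((inl (val a).2 == r)%:R * Z r)
                    - x (inl (val a).2) * ((inl (val a).1 == r)%:R * Z r))).
  by apply: eq_bigr => r _; rewrite brN_inr !evE /=; ring.
by rewrite sumrB -!mulr_sumr !sum_delta brN_inr !ffunE.
Qed.

Lemma ad2E (x : Nv F g) (X : ten2 F (basis g)) p q :
  ad2 (@brN F n g) x X (p, q) =
  brN x [ffun r => X (r, q)] p + brN x [ffun r => X (p, r)] q.
Proof. by rewrite ffunE /= big_split /= -!sum_brN. Qed.

End Graph.


Section Graph.
Variables (F : fieldType) (n : nat) (g : rel 'I_n).
Hypothesis g_sym : symmetric g.
Hypothesis g_irr : irreflexive g.
Hypothesis g_deg : forall i : 'I_n, (2 <= #|[set j | g i j]|)%N.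

Lemma TmxE (a : edge g) i j : Tmx F a i j =
  ((val a).1 == i)%:R * ((val a).2 == j)%:R - ((val a).2 == i)%:R * ((val a).1 == j)%:R.
Proof. by rewrite mxE ffunE !evE. Qed.

Lemma TST_prod (a b : edge g) (S : 'M[F]_n) i j :
  (Tmx F a *m S *m Tmx F b) i j = - patk b j (fun y => patk a i (fun x => S x y)).
Proof.
rewrite mxE.
set M := fun y => patk a i (fun x => S x y).
transitivity (\sum_y M y * Tmx F b y j).
  apply: eq_bigr => y _; congr (_ * _); rewrite mxE.
  transitivity (\sum_x (((val a).1 == i)%:R * (((val a).2 == x)%:R * S x y)
                 - ((val a).2 == i)%:R * (((val a).1 == x)%:R * S x y))).
    by apply: eq_bigr => x _; rewrite TmxE; ring.
  by rewrite sumrB -!mulr_sumr !sum_delta.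
transitivity (\sum_y (((val b).2 == j)%:R * (((val b).1 == y)%:R * M y)
                 - ((val b).1 == j)%:R * (((val b).2 == y)%:R * M y))).
  by apply: eq_bigr => y _; rewrite TmxE; ring.
by rewrite sumrB -!mulr_sumr !sum_delta /patk; ring.
Qed.

Lemma TST_ok : TST_type F g.
Proof.
move=> S H; apply/matrixP => p q; rewrite mxE.
have [p' gpp' p'q] := neighbor_ex g_deg p q.
have [q' gqq' q'p'] := neighbor_ex g_deg q p'.
have p'q' : p' != q' by rewrite eq_sym.
have [a [sa sa0 Ha]] := edge_ex F g_sym g_irr gpp'.
have [b [sb sb0 Hb]] := edge_ex F g_sym g_irr gqq'.
have T1 : (Tmx F a *m S *m Tmx F b) p' q' = - (sb * (sa * S p q)).
  by rewrite TST_prod Hb eqxx /= Ha eqxx.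
have T2 : (Tmx F b *m S *m Tmx F a) p' q' = 0.
  rewrite TST_prod (@patk_ext _ _ _ _ _ _ (fun _ => 0)).
    by rewrite /patk !mulr0 subrr oppr0.
  by move=> y; rewrite Hb (negbTE p'q') (negbTE p'q).
have := H a b; move/matrixP/(_ p' q'); rewrite [LHS]mxE T1 T2 addr0 mxE => /eqP.
rewrite oppr_eq0 !mulf_eq0 (negbTE sa0) (negbTE sb0) /= => /eqP //.
Qed.

End Graph.


Section Graph.
Variables (F : fieldType) (n : nat) (g : rel 'I_n).
Hypothesis charF0 : [pchar F] =i pred0.
Hypothesis g_sym : symmetric g.
Hypothesis g_irr : irreflexive g.
Hypothesis g_deg : forall i : 'I_n, (2 <= #|[set j | g i j]|)%N.

Lemma brN_zeroW (x Z : Nv F g) p : (forall i, Z (inl i) = 0) -> brN x Z p = 0.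
Proof.
by move=> HZ; case: p => [i|a]; rewrite ?brN_inl // brN_inr !HZ !mulr0 subrr.
Qed.

Lemma ltn_neq (u v : 'I_n) : (u < v)%N -> (u == v) = false /\ (v == u) = false.
Proof.
move=> l; split; apply/negbTE/eqP => E; move: l; rewrite E ltnn //.
Qed.

Lemma triangle (X : ten2 F (basis g)) (HX : antisym2 X)
  (H : forall k p q, ad2 (@brN F n g) (ev F (inl k)) X (p, q) = 0)
  (u v w : 'I_n) (a b c : edge g) :
  val a = (u, v) -> val b = (u, w) -> val c = (v, w) -> (u < v)%N -> (v < w)%N ->
  [/\ X (inl u, inr c) = 0, X (inl v, inr b) = 0 & X (inl w, inr a) = 0].
Proof.
move=> Ea Eb Ec luv lvw.
have luw := ltn_trans luv lvw.
have [uv vu] := ltn_neq luv; have [uw wu] := ltn_neq luw; have [vw wv] := ltn_neq lvw.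
set A := X (inl u, inr c); set B := X (inl v, inr b); set C := X (inl w, inr a).
have E1 : B = C.
  have := H u (inr a) (inr b); rewrite ad2E !brN_ev /patk Ea Eb /= !ffunE.
  rewrite ?eqxx ?uv ?vu ?uw ?wu ?vw ?wv /= (HX (inr a) (inl w)) -/C => E.
  move: E; rewrite !mul1r !mul0r ?subr0 ?sub0r; 
  by move/eqP; rewrite subr_eq0 => /eqP.
have E2 : - A = C.
  have := H v (inr a) (inr c); rewrite ad2E !brN_ev /patk Ea Ec /= !ffunE.
  rewrite ?eqxx ?uv ?vu ?uw ?wu ?vw ?wv /= (HX (inr a) (inl w)) -/C -/A => E.
  move: E; rewrite !mul1r !mul0r ?subr0 ?sub0r; 
  by move/eqP; rewrite subr_eq0 => /eqP.
have E3 : B = A.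
  have := H w (inr b) (inr c); rewrite ad2E !brN_ev /patk Eb Ec /= !ffunE.
  rewrite ?eqxx ?uv ?vu ?uw ?wu ?vw ?wv /= (HX (inr b) (inl v)) -/B -/A => E.
  move: E; rewrite !mul1r !mul0r ?subr0 ?sub0r; 
  by move/eqP; rewrite subr_eq0 => /eqP/oppr_inj ->.
have B0 : B = 0 by apply: (eq_neg0 charF0); rewrite {1}E1 -E2 E3.
by split; [rewrite -E3 | | rewrite -E1].
Qed.


Lemma mk_edge_P (i k : 'I_n) : (i < k)%N -> g i k ->
  ((i, k).1 < (i, k).2)%N && g (i, k).1 (i, k).2.
Proof. by move=> l gik; rewrite /= l gik. Qed.

Lemma inv_iff (X : ten2 F (basis g)) (HX : antisym2 X) :
  (forall x : Nv F g, ad2 (@brN F n g) x X = 0) <->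
  (exists Y : ten2 F (edge g), antisym2 Y /\ X = inZ2 Y).
Proof.
split; last first.
  move=> [Y [_ ->]] x; apply/ffunP => [[p q]]; rewrite ad2E.
  transitivity (0 : F); last by rewrite ffunE.
  by case: p => [i|a]; rewrite !brN_zeroW ?addr0 // => j; rewrite !ffunE.
move=> H.
have Hk : forall k p q, ad2 (@brN F n g) (ev F (inl k)) X (p, q) = 0.
  by move=> k p q; rewrite H ffunE.
have XA : forall i j, X (inl i, inl j) = 0.
  move=> i j.
  have [k gik _] := neighbor_ex g_deg i i.
  have [a [s s0 Ha]] := edge_ex F g_sym g_irr gik.
  have := Hk k (inr a) (inl j); rewrite ad2E brN_inl addr0 brN_ev Ha eqxx /= ffunE.
  by move/eqP; rewrite mulf_eq0 (negbTE s0) => /eqP.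
have XB : forall i b, X (inl i, inr b) = 0.
  move=> i b.
  have /andP [l12 g12] := valP b.
  case: (neighbor_ex2 g_deg i (val b).1 (val b).2) => [[k gik /andP [kb1 kb2]]|[gi1 gi2]].
    have [a [s s0 Ha]] := edge_ex F g_sym g_irr gik.
    have := Hk k (inr a) (inr b); rewrite ad2E !brN_ev Ha eqxx /= ffunE patk0 // addr0.
    by move/eqP; rewrite mulf_eq0 (negbTE s0) => /eqP.
  have Eb : val b = ((val b).1, (val b).2) by case: (val b).
  have i1 : i != (val b).1 by apply/eqP => E; move: gi1; rewrite E g_irr.
  have i2 : i != (val b).2 by apply/eqP => E; move: gi2; rewrite E g_irr.
  case: (ltngtP i (val b).1) => [lt1|gt1|E]; last by move: i1; rewrite (val_inj E) eqxx.
  - have [] := @triangle X HX Hk i (val b).1 (val b).2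
       (exist _ (i, (val b).1) (mk_edge_P lt1 gi1))
       (exist _ (i, (val b).2) (mk_edge_P (ltn_trans lt1 l12) gi2)) b
       (erefl _) (erefl _) Eb lt1 l12.
    by [].
  case: (ltngtP i (val b).2) => [lt2|gt2|E]; last by move: i2; rewrite (val_inj E) eqxx.
  - have [] := @triangle X HX Hk (val b).1 i (val b).2
       (exist _ ((val b).1, i) (mk_edge_P gt1 (eq_trans (g_sym _ _) gi1)))
       b (exist _ (i, (val b).2) (mk_edge_P lt2 gi2))
       (erefl _) Eb (erefl _) gt1 lt2.
    by [].
  - have [] := @triangle X HX Hk (val b).1 (val b).2 i
       b (exist _ ((val b).1, i) (mk_edge_P (ltn_trans l12 gt2) (eq_trans (g_sym _ _) gi1)))
       (exist _ ((val b).2, i) (mk_edge_P gt2 (eq_trans (g_sym _ _) gi2)))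
       Eb (erefl _) (erefl _) l12 gt2.
    by [].
have Xe : forall p q, X (p, q) = - X (q, p) := HX.
exists [ffun ab => X (inr ab.1, inr ab.2)]; split.
  by move=> a b; rewrite !ffunE /= Xe.
apply/ffunP => [[[i|a] [j|b]]]; rewrite !ffunE /=.
- by rewrite XA.
- by rewrite XB.
- by rewrite Xe XB oppr0.
- by [].
Qed.

End Graph.


Section Cob.
Variables (F : fieldType) (n : nat) (g : rel 'I_n).
Hypothesis charF0 : [pchar F] =i pred0.
Hypothesis g_sym : symmetric g.
Hypothesis g_irr : irreflexive g.
Hypothesis g_deg : forall i : 'I_n, (2 <= #|[set j | g i j]|)%N.
Variable delta : Nv F g -> ten2 F (basis g).
Hypothesis Hd : is_cobracket (@brN F n g) delta.

Lemma Ld : linear delta. Proof. by case: Hd. Qed.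
Lemma Ad x : antisym2 (delta x). Proof. by case: Hd. Qed.
Lemma CJd : coJacobi delta. Proof. by case: Hd. Qed.
Lemma Cd x y : delta (brN x y) = ad2 (@brN F n g) x (delta y) - ad2 (@brN F n g) y (delta x).
Proof. by case: Hd. Qed.

Lemma delta0 : delta 0 = 0. Proof. by case: (lin_props Ld). Qed.

Lemma inW_lin : linear (inW g : Wv F n -> Nv F g).
Proof. by move=> k u v; apply/ffunP => [[i|a]]; rewrite !ffunE //= [_ *: _]mulr0 addr0. Qed.

Lemma inZ_lin : linear (@inZ F n g).
Proof. by move=> k u v; apply/ffunP => [[i|a]]; rewrite !ffunE //= [_ *: _]mulr0 addr0. Qed.

Lemma inW_ev k : inW g (ev F k) = ev F (inl k).
Proof. by apply/ffunP => [[i|a]]; rewrite !ffunE. Qed.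

Lemma inZ_ev a : inZ (ev F a) = ev F (inr a) :> Nv F g.
Proof. by apply/ffunP => [[i|b]]; rewrite !ffunE. Qed.

Lemma brN_inZl (z : Zv F g) (y : Nv F g) : brN (inZ z) y = 0.
Proof. by apply/ffunP => [[i|a]]; rewrite !ffunE //= !mul0r subrr. Qed.

Lemma ad2_inZ (z : Zv F g) X : ad2 (@brN F n g) (inZ z) X = 0.
Proof. by apply/ffunP => [[p q]]; rewrite ad2E !brN_inZl !ffunE addr0. Qed.

Lemma brN_WW (x y : Wv F n) : brN (inW g x) (inW g y) = inZ (brW g x y).
Proof. by apply/ffunP => [[i|a]]; rewrite !ffunE. Qed.

Lemma Hz (z : Zv F g) (y : Nv F g) : ad2 (@brN F n g) y (delta (inZ z)) = 0.
Proof.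
have := Cd (inZ z) y; rewrite brN_inZl delta0 ad2_inZ sub0r => /esym/eqP.
by rewrite oppr_eq0 => /eqP.
Qed.

Definition dz (z : Zv F g) : ten2 F (edge g) :=
  [ffun ab => delta (inZ z) (inr ab.1, inr ab.2)].
Definition DD (a : edge g) (v : Wv F n) : Wv F n :=
  [ffun w => delta (inW g v) (inl w, inr a)].
Definition phi (v : Wv F n) : ten2 F (edge g) :=
  [ffun ab => delta (inW g v) (inr ab.1, inr ab.2)].

Lemma dzE z : delta (inZ z) = inZ2 (dz z).
Proof.
have [Y [_ EY]] := (inv_iff charF0 g_sym g_irr g_deg (Ad (inZ z))).1 (Hz z).
apply/ffunP => [[p q]]; rewrite [in LHS]EY !ffunE.
case: p => [i|a]; case: q => [j|b] //=.
by rewrite /dz ffunE /= EY ffunE.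
Qed.

Lemma dZ0 (z : Zv F g) (p q : basis g) : ~~ (isE p && isE q) -> delta (inZ z) (p, q) = 0.
Proof. by rewrite dzE ffunE; case: p => [i|a]; case: q => [j|b]. Qed.


Lemma dW_lin : linear (fun v => delta (inW g v)).
Proof. by move=> k u v /=; rewrite inW_lin Ld. Qed.

Lemma deltaWE v p q : delta (inW g v) (p, q) = \sum_i v i * delta (ev F (inl i)) (p, q).
Proof.
have E := @lin_vec _ _ _ (fun v => delta (inW g v)) v dW_lin; simpl in E.
rewrite E sum_ffunE; apply: eq_bigr => i _; by rewrite ffZ inW_ev.
Qed.

Lemma brN_isZ (x y : Nv F g) : brN x y = inZ [ffun a => brN x y (inr a)].
Proof. by apply/ffunP => [[i|a]]; rewrite !ffunE. Qed.

Lemma Om_ev l i m : delta (ev F (inl l)) (inl i, inl m) = 0.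
Proof.
have C1 : forall i m, m != l -> delta (ev F (inl l)) (inl i, inl m) = 0.
  move=> i' m' ml.
  have [k gmk kl] := neighbor_ex g_deg m' l.
  have [c [s s0 Hc]] := edge_ex F g_sym g_irr gmk.
  have := congr1 (fun X : ten2 F (basis g) => X (inl i', inr c)) (Cd (ev F (inl k)) (ev F (inl l))).
  rewrite /=.
  rewrite ffB !ad2E !brN_inl !add0r !brN_ev brN_isZ dZ0 // !Hc eqxx.
  rewrite (eq_sym l k) (negbTE kl) (eq_sym l m') (negbTE ml) /= !ffunE subr0 => /esym/eqP.
  by rewrite mulf_eq0 (negbTE s0) => /eqP.
have [->|ml] := eqVneq m l; last exact: C1.
have [->|il] := eqVneq i l; last by rewrite (Ad _ (inl i)) C1 ?oppr0.
exact: (eq_neg0 charF0 (Ad _ _ _)).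
Qed.

Lemma Om v i j : delta (inW g v) (inl i, inl j) = 0.
Proof. by rewrite deltaWE big1 // => k _; rewrite Om_ev mulr0. Qed.

Lemma DD_lin a : linear (DD a).
Proof. by move=> k u v; apply/ffunP => w; rewrite /DD !ffunE inW_lin Ld ffD ffZ. Qed.

Lemma phi_lin : linear phi.
Proof. by move=> k u v; apply/ffunP => w; rewrite /phi !ffunE inW_lin Ld ffD ffZ. Qed.

Lemma dz_lin : linear dz.
Proof. by move=> k u v; apply/ffunP => w; rewrite /dz !ffunE inZ_lin Ld ffD ffZ. Qed.

Lemma dz_anti z : antisym2 (dz z).
Proof. by move=> a b; rewrite !ffunE Ad. Qed.

Lemma phi_anti v : antisym2 (phi v).
Proof. by move=> a b; rewrite !ffunE Ad. Qed.

Lemma DD_vec a u w : DD a u w = \sum_i u i * DD a (ev F i) w.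
Proof. by rewrite (lin_vec u (DD_lin a)) sum_ffunE; apply: eq_bigr => i _; rewrite ffZ. Qed.

Lemma phi_vec u p : phi u p = \sum_i u i * phi (ev F i) p.
Proof. by rewrite (lin_vec u phi_lin) sum_ffunE; apply: eq_bigr => i _; rewrite ffZ. Qed.

Lemma dz_vec z : dz z = \sum_c z c *: dz (ev F c).
Proof. exact: lin_vec dz_lin. Qed.

Lemma decompW v : delta (inW g v) =
  \sum_(a : edge g) wedge (inW g (DD a v)) (inZ (ev F a)) + inZ2 (phi v).
Proof.
apply/ffunP => [[p q]]; rewrite ffD sum_ffunE.
case: p => [i|a]; case: q => [j|b]; rewrite !ffunE /=.
- by rewrite Om big1 ?addr0 // => a _; rewrite !ffunE /= !mulr0 subrr.
- rewrite addr0 (eq_bigr (fun a => DD a v i * (b == a)%:R)) ?sum_delta'; first by rewrite /DD ffunE.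
  by move=> a _; rewrite /DD !ffunE /= !ffunE mul0r subr0.
- rewrite addr0 (eq_bigr (fun a' => - (DD a' v j * (a == a')%:R))) ?sumrN ?sum_delta'.
    by rewrite Ad /DD ffunE.
  by move=> a' _; rewrite /DD !ffunE /= !ffunE mul0r sub0r.
- by rewrite big1 ?add0r // => a' _; rewrite !ffunE /= !mul0r subrr.
Qed.


Lemma dEZ e p q : delta (ev F (inr e)) (p, q) = inZ2 (dz (ev F e)) (p, q).
Proof. by rewrite -inZ_ev dzE. Qed.

Lemma dzv z a b : delta (inZ z) (inr a, inr b) = dz z (a, b).
Proof. by rewrite /dz ffunE. Qed.

Lemma coJ_dz : coJacobi dz.
Proof.
move=> z; apply/ffunP => [[[a b] c]]; rewrite ff0 (CJ charF0 _ (dz_anti z)).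
have := congr1 (fun T : ten3 F (basis g) => T (inr a, inr b, inr c)) (CJd (inZ z)).
rewrite /= ff0 (CJ charF0 _ (Ad _)) big_sumType /= => E; apply: (etrans _ E).
rewrite [X in _ = X + _]big1; last by move=> i _; rewrite !dZ0 // !mul0r !addr0.
rewrite add0r; by apply: eq_bigr => e _; rewrite !dEZ !dzv !ffunE.
Qed.


Lemma comm a b v : DD a (DD b v) - DD b (DD a v) = \sum_c dz (ev F c) (a, b) *: DD c v.
Proof.
apply/ffunP => w; rewrite ffB sum_ffunE.
under eq_bigr do rewrite ffZ.
have := congr1 (fun T : ten3 F (basis g) => T (inl w, inr a, inr b)) (CJd (inW g v)).
rewrite /= ff0 (CJ charF0 _ (Ad _)) big_sumType /= => E.
have S1 : \sum_(i < n) (delta (inW g v) (inl i, inl w) * delta (ev F (inl i)) (inr a, inr b)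
    + delta (inW g v) (inl i, inr a) * delta (ev F (inl i)) (inr b, inl w)
    + delta (inW g v) (inl i, inr b) * delta (ev F (inl i)) (inl w, inr a))
  = \sum_i DD b v i * DD a (ev F i) w - \sum_i DD a v i * DD b (ev F i) w.
  rewrite -sumrB; apply: eq_bigr => i _.
  rewrite Om mul0r add0r (Ad (ev F (inl i)) (inr b) (inl w)) -inW_ev /DD !ffunE; ring.
have S2 : \sum_(e : edge g) (delta (inW g v) (inr e, inl w) * delta (ev F (inr e)) (inr a, inr b)
    + delta (inW g v) (inr e, inr a) * delta (ev F (inr e)) (inr b, inl w)
    + delta (inW g v) (inr e, inr b) * delta (ev F (inr e)) (inl w, inr a))
  = - \sum_e dz (ev F e) (a, b) * DD e v w.
  rewrite -sumrN; apply: eq_bigr => e _.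
  rewrite (Ad (inW g v) (inr e) (inl w)) !dEZ /DD !ffunE /=; ring.
move: E; rewrite S1 S2 => /eqP; rewrite subr_eq0 => /eqP E.
by rewrite (DD_vec a (DD b v) w) (DD_vec b (DD a v) w) E.
Qed.


Lemma cocyc (x y : Wv F n) :
  \sum_c brW g x y c *: dz (ev F c) =
  \sum_c \sum_e (brW g (DD e x) y c + brW g x (DD e y) c) *: wedge (ev F c) (ev F e).
Proof.
apply/ffunP => [[a b]]; rewrite !sum_ffunE.
under [RHS]eq_bigr do rewrite sum_ffunE.
rewrite (wsum (fun c e => brW g (DD e x) y c + brW g x (DD e y) c)) /=.
rewrite -sum_ffunE -dz_vec -dzv -brN_WW Cd ffB !ad2E !brN_inr.
have Adl : forall u p j, delta (inW g u) (inr p, inl j) = - delta (inW g u) (inl j, inr p).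
  by move=> u p j; rewrite Ad.
rewrite /DD !ffunE /= !Adl; ring.
Qed.

Lemma phiId (v : Wv F n) :
  \sum_c wedge21 (phi (DD c v)) (ev F c)
  + \sum_a \sum_(b | bord a b)
      phi v (a, b) *: (wedge21 (dz (ev F a)) (ev F b) - wedge12 (ev F a) (dz (ev F b))) = 0.
Proof.
apply/ffunP => [[[a b] c]]; rewrite ffD ff0 -/(cojac dz (phi v)).
rewrite (CJ charF0 _ (phi_anti v)) sum_ffunE.
under eq_bigr do rewrite w21E !evE.
rewrite !big_split /= !sum_delta'.
have := congr1 (fun T : ten3 F (basis g) => T (inr a, inr b, inr c)) (CJd (inW g v)).
rewrite /= ff0 (CJ charF0 _ (Ad _)) big_sumType /= => E.
have S1 : \sum_(i < n) (delta (inW g v) (inl i, inr a) * delta (ev F (inl i)) (inr b, inr c)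
    + delta (inW g v) (inl i, inr b) * delta (ev F (inl i)) (inr c, inr a)
    + delta (inW g v) (inl i, inr c) * delta (ev F (inl i)) (inr a, inr b))
  = phi (DD a v) (b, c) + phi (DD b v) (c, a) + phi (DD c v) (a, b).
  rewrite (phi_vec (DD a v) (b, c)) (phi_vec (DD b v) (c, a)) (phi_vec (DD c v) (a, b)).
  rewrite -!big_split; apply: eq_bigr => i _; rewrite -inW_ev /DD /phi !ffunE /=; ring.
have S2 : \sum_(e : edge g) (delta (inW g v) (inr e, inr a) * delta (ev F (inr e)) (inr b, inr c)
    + delta (inW g v) (inr e, inr b) * delta (ev F (inr e)) (inr c, inr a)
    + delta (inW g v) (inr e, inr c) * delta (ev F (inr e)) (inr a, inr b))
  = \sum_e (phi v (e, a) * dz (ev F e) (b, c) + phi v (e, b) * dz (ev F e) (c, a)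
             + phi v (e, c) * dz (ev F e) (a, b)).
  by apply: eq_bigr => e _; rewrite !dEZ /phi !ffunE.
rewrite S1 S2 in E; apply: (etrans _ E); congr (_ + _); [ring | by rewrite !big_split].
Qed.

End Cob.


Unset Implicit Arguments.
Set Strict Implicit.
Set Printing Implicit Defensive.

Theorem mainTheorem12
  (F : fieldType) (charF0 : [pchar F] =i pred0)
  (n : nat) (g : rel 'I_n)
  (g_sym : symmetric g) (g_irr : irreflexive g)
  (g_deg : forall i : 'I_n, (2 <= #|[set j | g i j]|)%N) :
  (* (Lambda^2 n)^n = Lambda^2 z *)
  (forall X : ten2 F (basis g), antisym2 X ->
     ((forall x : Nv F g, ad2 (@brN F n g) x X = 0) <->
      (exists Y : ten2 F (edge g), antisym2 Y /\ X = inZ2 Y)))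
  (* n is of TST type *)
  /\ TST_type F g
  (* structure of Lie bialgebra cobrackets *)
  /\ (forall delta : Nv F g -> ten2 F (basis g),
       is_cobracket (@brN F n g) delta ->
       (* delta(z) in Lambda^2 z *)
       (forall (z : Zv F g) (p q : basis g),
          ~~ (isE p && isE q) ->
          delta (inZ z) (p, q) = 0)
       (* delta(W) in (W /\ z) + Lambda^2 z *)
    /\ (forall (v : Wv F n) (i j : 'I_n), delta (inW g v) (inl i, inl j) = 0)
    /\ exists (dz : Zv F g -> ten2 F (edge g))
              (D : edge g -> Wv F n -> Wv F n)
              (phi : Wv F n -> ten2 F (edge g)),
         [/\ linear dz, (forall a, linear (D a)), linear phi,
             (forall z, antisym2 (dz z)) & (forall v, antisym2 (phi v))] /\
         [/\ (* delta(z) = delta_z(z) *)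
             (forall z, delta (inZ z) = inZ2 (dz z)),
             (* delta(v) = sum_a D^a(v) /\ a + phi(v) *)
             (forall v, delta (inW g v) =
                \sum_(a : edge g) wedge (inW g (D a v)) (inZ (ev F a)) + inZ2 (phi v)),
             (* delta_z satisfies co-Jacobi *)
             coJacobi dz &
             (* [D^a, D^b] = sum_c c_c^{ab} D^c  for a < b *)
             (forall (a b : edge g), bord a b -> forall v,
                D a (D b v) - D b (D a v) =
                \sum_(c : edge g) dz (ev F c) (a, b) *: D c v)] /\
         [/\
             (* sum_c T_c(x)(y) delta_z(c) = sum_{c,e} (T_c(D^e x)(y) + T_c(x)(D^e y)) c /\ e *)
             (forall x y : Wv F n,
                \sum_(c : edge g) brW g x y c *: dz (ev F c) =
                \sum_(c : edge g) \sum_(e : edge g)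
                   (brW g (D e x) y c + brW g x (D e y) c) *: wedge (ev F c) (ev F e)) &
             (* sum_c phi(D^c v) /\ c + sum_{a<b} phi_ab(v) (dz(a) /\ b - a /\ dz(b)) = 0 *)
             (forall v : Wv F n,
                \sum_(c : edge g) wedge21 (phi (D c v)) (ev F c)
                + \sum_(a : edge g) \sum_(b : edge g | bord a b)
                    phi v (a, b) *: (wedge21 (dz (ev F a)) (ev F b)
                                     - wedge12 (ev F a) (dz (ev F b))) = 0)]).
Proof.
split; first by move=> X HX; exact: inv_iff.
split; first exact: TST_ok.
move=> delta Hd.
split; first by move=> z p q; exact: dZ0.
split; first by move=> v i j; exact: Om.
exists (dz delta), (DD delta), (phi delta).
split; first split.
- exact: dz_lin.
- move=> a; exact: DD_lin.
- exact: phi_lin.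
- exact: dz_anti.
- exact: phi_anti.
split; first split.
- exact: dzE.
- exact: decompW.
- exact: coJ_dz.
- by move=> a b _ v; apply: comm.
split.
- exact: cocyc.
- exact: phiId.
Qed.
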